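(* Let $Q^3=\mathbb{P}(\omega^o)\cap Q^4$ and let $L$ be a circle in $S^3\subset Q^3$. Then there is a unique pair $\{[\lambda],[\lambda j]\}\subset Q^3\setminus S^3$ such that the two-sphere in $S^4$ associated to $\{[\lambda],[\lambda j]\}$ contains $L$. The set of oriented circles (and points) in $S^3$ is thus parametrized by the three-dimensional complex quadric $Q^3$.
   Context: $\mathbb{H}$ denotes the quaternions, $\mathbb{H}=\mathbb{C}\oplus j\mathbb{C}$; $\mathbb{H}^2$ is a right $\mathbb{H}$-vector space identified with $\mathbb{C}^4$; $\mathbb{HP}^1\cong S^4$. $Q^4=\{[\alpha]\in\mathbb{P}(\Lambda^2\mathbb{C}^4):\alpha\wedge\alpha=0\}$, with $[v\wedge w]$ identified with the line of $\mathbb{P}(\mathbb{C}^4)$ through $[v],[w]$. The antilinear extension of $v\wedge w\mapsto vj\wedge wj$ gives an involution $\alpha\mapsto\alpha j$ of $Q^4$ whose fixed points $[x\wedge xj]$ are identified with the points $x\mathbb{H}$ of $S^4$; for a non-fixed point $[\lambda]$, $[\lambda]$ and $[\lambda j]$ are the twistor lifts of one round two-sphere of $S^4$ with its two conformal structures. Fix an $\mathbb{H}$-basis $e_1,e_2$ and $\mathfrak{h}(e_1a+e_2b,e_1c+e_2d)=\bar a d+\bar b c$; write $\mathfrak{h}=h+j\omega$ with $h$ hermitian and $\omega$ alternating complex bilinear on $\mathbb{C}^4$ (viewed as a linear functional on $\Lambda^2\mathbb{C}^4$), and $\omega^o=\ker\omega\subset\Lambda^2\mathbb{C}^4$. $S^3=\{x\mathbb{H}:\mathfrak{h}(x,x)=0\}$,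 identified with the set $\{[x\wedge xj]:x\mathbb{H}\in S^3\}\subset Q^3$. A circle in $S^4$ is the image under a Möbius transformation of a real affine line in an affine chart. *)

(* Defs.v *)
From HB Require Import structures.
From mathcomp Require Import all_boot all_order all_algebra.
From mathcomp Require Import complex.
From mathcomp Require Import reals.
Set Implicit Arguments. Unset Strict Implicit. Unset Printing Implicit Defensive.
Import Order.TTheory GRing.Theory Num.Theory.
Local Open Scope ring_scope.

Section Quaternionic.
Variable R : rcfType.
Local Notation C := R[i].

(** Quaternions H = C (+) jC : the pair (a, b) stands for a + j b,
    with the rule  j z = conj(z) j,  j^2 = -1. *)
Definition quat := (C * C)%type.
Definition qmk (a b : C) : quat := (a, b).
Definition q0 : quat := (0, 0).
Definition q1 : quat := (1, 0).
Definition qj : quat := (0, 1).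
Definition qadd (p q : quat) : quat := (p.1 + q.1, p.2 + q.2).
(* (a + jb)(c + jd) = (ac - conj(b) d) + j (conj(a) d + b c) *)
Definition qmul (p q : quat) : quat :=
  (p.1 * q.1 - conjc p.2 * q.2, conjc p.1 * q.2 + p.2 * q.1).
Definition qconj (p : quat) : quat := (conjc p.1, - p.2).
Definition qreal (t : R) : quat := ((t%:C)%C, 0).

(** H^2 (right H-vector space with H-basis e1, e2) identified with C^4:
    x = e1 (a1 + j b1) + e2 (a2 + j b2)  <->  (a1, b1, a2, b2). *)
Definition i0 : 'I_4 := @Ordinal 4 0 isT.
Definition i1 : 'I_4 := @Ordinal 4 1 isT.
Definition i2 : 'I_4 := @Ordinal 4 2 isT.
Definition i3 : 'I_4 := @Ordinal 4 3 isT.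

Definition comp1 (x : 'rV[C]_4) : quat := (x 0 i0, x 0 i1).
Definition comp2 (x : 'rV[C]_4) : quat := (x 0 i2, x 0 i3).
Definition mkH2 (p q : quat) : 'rV[C]_4 :=
  \row_(k < 4) match val k with
               | 0 => p.1 | 1 => p.2 | 2 => q.1 | _ => q.2 end.

Definition rmulH (x : 'rV[C]_4) (q : quat) : 'rV[C]_4 :=
  mkH2 (qmul (comp1 x) q) (qmul (comp2 x) q).
Definition jmap (x : 'rV[C]_4) : 'rV[C]_4 := rmulH x qj.

Definition hform (x y : 'rV[C]_4) : quat :=
  qadd (qmul (qconj (comp1 x)) (comp2 y)) (qmul (qconj (comp2 x)) (comp1 y)).
(* hform = h + j omega *)
Definition hC (x y : 'rV[C]_4) : C := (hform x y).1.
Definition omega (x y : 'rV[C]_4) : C := (hform x y).2.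

(** Points of S^4 = HP^1 are quaternionic lines xH, x <> 0.
    [samept x y] : y is a nonzero vector representing the point xH. *)
Definition samept (x y : 'rV[C]_4) : Prop :=
  x != 0 /\ exists q : quat, q != q0 /\ y = rmulH x q.

Definition inS3pt (x : 'rV[C]_4) : Prop := x != 0 /\ hform x x = q0.

(** Moebius transformations: induced by invertible quaternionic 2x2 matrices
    [a b; c d] acting on the left of H^2 (commuting with right scalars). *)
Definition mob (a b c d : quat) (x : 'rV[C]_4) : 'rV[C]_4 :=
  mkH2 (qadd (qmul a (comp1 x)) (qmul b (comp2 x)))
       (qadd (qmul c (comp1 x)) (qmul d (comp2 x))).
Definition mob_invertible (a b c d : quat) : Prop :=
  exists a' b' c' d' : quat,
    (forall x, mob a' b' c' d' (mob a b c d x) = x) /\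
    (forall x, mob a b c d (mob a' b' c' d' x) = x).

(** Circle: image under the Moebius map [a b; c d] of the real affine line
    {p + t u : t in R} (u <> 0) in the affine chart q |-> (e1 q + e2)H,
    together with its point at infinity e1 H.
    [oncircle .. x] : the nonzero vector x represents a point of the circle. *)
Definition oncircle (a b c d p u : quat) (x : 'rV[C]_4) : Prop :=
  samept (mob a b c d (mkH2 q1 q0)) x \/
  exists t : R, samept (mob a b c d (mkH2 (qadd p (qmul (qreal t) u)) q1)) x.

(** Points of Q^4 = projective lines of P(C^4), i.e. complex 2-planes,
    given as the row space of a rank-2 matrix W (W represents [v /\ w] for its
    rows v, w); two such represent the same point iff (W == W')%MS. *)
Definition inQ4 (W : 'M[C]_(2, 4)) : Prop := \rank W = 2%N.
Definition jspan (W : 'M[C]_(2, 4)) : 'M[C]_(2, 4) :=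
  col_mx (jmap (row 0 W)) (jmap (row 1 W)).
(* Q^3 = P(omega^o) cap Q^4 : omega(v /\ w) = omega(v, w) = 0 *)
Definition inQ3 (W : 'M[C]_(2, 4)) : Prop :=
  inQ4 W /\ omega (row 0 W) (row 1 W) = 0.
(* the points of S^3 inside Q^3 : [x /\ xj] with xH in S^3 *)
Definition isS3inQ3 (W : 'M[C]_(2, 4)) : Prop :=
  exists x : 'rV[C]_4, inS3pt x /\ (W == col_mx x (jmap x))%MS.
Definition inQ3mS3 (W : 'M[C]_(2, 4)) : Prop := inQ3 W /\ ~ isS3inQ3 W.

(** The two-sphere of S^4 associated to {[lambda], [lambda j]} (lambda = W not
    j-fixed): its twistor projection { vH : v in W, v <> 0 }. *)
Definition onsphere (W : 'M[C]_(2, 4)) (x : 'rV[C]_4) : Prop :=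
  exists v : 'rV[C]_4, v != 0 /\ (v <= W)%MS /\ samept v x.

End Quaternionic.

(* Main.v *)
Require Import Defs.
From HB Require Import structures.
From mathcomp Require Import all_boot all_order all_algebra.
From mathcomp Require Import complex.
From mathcomp Require Import reals.
From mathcomp Require Import ring.
Import Order.TTheory GRing.Theory Num.Theory.
Local Open Scope ring_scope.
Set Implicit Arguments. Unset Strict Implicit. Unset Printing Implicit Defensive.

Section Q.
Variable R : rcfType.
Local Notation C := R[i].
Local Notation quat := (quat R).

Lemma cjD (x y : C) : (x + y)^*%C = x^*%C + y^*%C. Proof. exact: rmorphD. Qed.
Lemma cjM (x y : C) : (x * y)^*%C = x^*%C * y^*%C. Proof. exact: rmorphM. Qed.
Lemma cjN (x : C) : (- x)^*%C = - x^*%C. Proof. exact: rmorphN. Qed.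
Lemma cjB (x y : C) : (x - y)^*%C = x^*%C - y^*%C. Proof. exact: rmorphB. Qed.

Definition qneg (p : quat) : quat := (- p.1, - p.2).
Definition qnorm (p : quat) : C := p.1 * p.1^*%C + p.2 * p.2^*%C.
Definition qinv (p : quat) : quat := (p.1^*%C / qnorm p, - p.2 / qnorm p).
Definition qc (z : C) : quat := (z, 0).

Ltac qsimpl := rewrite /qmul /qadd /qconj /qreal /q1 /q0 /qj /qneg /qc; cbn [fst snd].
Ltac cring := rewrite ?(cjD, cjN, cjB, cjM, conjcK, conjc0, conjc1); ring.
Ltac qsolve := qsimpl; congr (_, _); cring.

Lemma qmulA (p q r : quat) : qmul (qmul p q) r = qmul p (qmul q r).
Proof. case: p q r => [p1 p2] [q1 q2] [r1 r2]; qsolve. Qed.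
Lemma qmulDl (p q r : quat) : qmul (qadd p q) r = qadd (qmul p r) (qmul q r).
Proof. case: p q r => [p1 p2] [q1 q2] [r1 r2]; qsolve. Qed.
Lemma qmulDr (p q r : quat) : qmul r (qadd p q) = qadd (qmul r p) (qmul r q).
Proof. case: p q r => [p1 p2] [q1 q2] [r1 r2]; qsolve. Qed.
Lemma qconjM (p q : quat) : qconj (qmul p q) = qmul (qconj q) (qconj p).
Proof. case: p q => [p1 p2] [q1 q2]; qsolve. Qed.
Lemma qconjK (p : quat) : qconj (qconj p) = p.
Proof. case: p => [p1 p2]; qsolve. Qed.
Lemma qmul1q (p : quat) : qmul (q1 R) p = p.
Proof. case: p => [p1 p2]; qsolve. Qed.
Lemma qmulq1 (p : quat) : qmul p (q1 R) = p.
Proof. case: p => [p1 p2]; qsolve. Qed.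
Lemma qmul0q (p : quat) : qmul (q0 R) p = q0 R.
Proof. case: p => [p1 p2]; qsolve. Qed.
Lemma qmulq0 (p : quat) : qmul p (q0 R) = q0 R.
Proof. case: p => [p1 p2]; qsolve. Qed.

Lemma cj_ge0 (x : C) : 0 <= x * x^*%C. Proof. exact: mulcJ_ge0. Qed.

Lemma qnorm_eq0 (p : quat) : qnorm p = 0 -> p = q0 R.
Proof.
case: p => [a b]; rewrite /qnorm /= => /eqP; rewrite paddr_eq0 ?cj_ge0 //.
case/andP; rewrite !mulf_eq0 !conjc_eq0 !orbb => /eqP -> /eqP ->. by [].
Qed.

Lemma qnorm_real (p : quat) : (qnorm p)^*%C = qnorm p.
Proof. case: p => [a b]; rewrite /qnorm /=. cring. Qed.

Lemma qmulV (p : quat) : p != q0 R -> qmul p (qinv p) = q1 R.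
Proof.
move=> hp; have hn : qnorm p != 0 by apply/eqP => /qnorm_eq0 /eqP; rewrite (negbTE hp).
move: hn; rewrite /qinv /qmul /q1; case: p {hp} => [a b] /=; rewrite /qnorm /= => hn.
congr (_,_); rewrite ?cjD ?cjN ?cjB ?cjM ?conjcK ?conjc0 ?conjc1; field; exact: hn.
Qed.

Lemma qmulVq (p : quat) : p != q0 R -> qmul (qinv p) p = q1 R.
Proof.
move=> hp; have hn : qnorm p != 0 by apply/eqP => /qnorm_eq0 /eqP; rewrite (negbTE hp).
have hr := qnorm_real p.
move: hn hr; rewrite /qinv /qmul /q1; case: p {hp} => [a b] /=; rewrite /qnorm /= => hn hr.
rewrite !cjM conjc_inv hr.
congr (_,_); rewrite ?cjD ?cjN ?cjB ?cjM ?conjcK ?conjc0 ?conjc1; field; exact: hn.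
Qed.

Lemma qinv_neq0 (p : quat) : p != q0 R -> qinv p != q0 R.
Proof.
move=> hp; apply/eqP => h; have := qmulV hp; rewrite h qmulq0 /q0 /q1 => -[] /eqP.
by rewrite eq_sym oner_eq0.
Qed.

Lemma qmul_neq0 (p q : quat) : p != q0 R -> q != q0 R -> qmul p q != q0 R.
Proof.
move=> hp hq; apply/eqP => h; move/eqP: hq; apply.
by rewrite -(qmul1q q) -(qmulVq hp) qmulA h qmulq0.
Qed.

Lemma q1_neq0 : q1 R != q0 R.
Proof. by apply/eqP => -[] /eqP; rewrite oner_eq0. Qed.
Lemma qj_neq0 : qj R != q0 R.
Proof. by apply/eqP => -[] /eqP; rewrite oner_eq0. Qed.

End Q.

Section V.
Variable R : rcfType.
Local Notation C := R[i].
Local Notation quat := (quat R).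
Local Notation vec := 'rV[C]_4.

Lemma comp1_mk (p q : quat) : comp1 (mkH2 p q) = p.
Proof. by rewrite /comp1 /mkH2 !mxE; case: p. Qed.
Lemma comp2_mk (p q : quat) : comp2 (mkH2 p q) = q.
Proof. by rewrite /comp2 /mkH2 !mxE; case: q. Qed.
Lemma mkH2_comp (x : vec) : mkH2 (comp1 x) (comp2 x) = x.
Proof.
apply/rowP => k; rewrite /mkH2 /comp1 /comp2 !mxE.
case: k => [[|[|[|[|n]]]] Hk] //=; congr (x 0 _); apply: val_inj => //.
Qed.
Lemma vecP (x y : vec) : comp1 x = comp1 y -> comp2 x = comp2 y -> x = y.
Proof. by move=> h1 h2; rewrite -(mkH2_comp x) -(mkH2_comp y) h1 h2. Qed.
Lemma comp1D (x y : vec) : comp1 (x + y) = qadd (comp1 x) (comp1 y).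
Proof. by rewrite /comp1 !mxE. Qed.
Lemma comp2D (x y : vec) : comp2 (x + y) = qadd (comp2 x) (comp2 y).
Proof. by rewrite /comp2 !mxE. Qed.
Lemma comp1Z (z : C) (x : vec) : comp1 (z *: x) = qmul (comp1 x) (qc z).
Proof. rewrite /comp1 /qmul /qc !mxE; cbn [fst snd]; congr (_,_); ring. Qed.
Lemma comp2Z (z : C) (x : vec) : comp2 (z *: x) = qmul (comp2 x) (qc z).
Proof. rewrite /comp2 /qmul /qc !mxE; cbn [fst snd]; congr (_,_); ring. Qed.
Lemma comp10 : comp1 (0 : vec) = q0 R. Proof. by rewrite /comp1 !mxE. Qed.
Lemma comp20 : comp2 (0 : vec) = q0 R. Proof. by rewrite /comp2 !mxE. Qed.
Lemma comp1N (x : vec) : comp1 (- x) = qneg (comp1 x). Proof. by rewrite /comp1 !mxE. Qed.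
Lemma comp2N (x : vec) : comp2 (- x) = qneg (comp2 x). Proof. by rewrite /comp2 !mxE. Qed.
Lemma comp1R (x : vec) q : comp1 (rmulH x q) = qmul (comp1 x) q.
Proof. by rewrite /rmulH comp1_mk. Qed.
Lemma comp2R (x : vec) q : comp2 (rmulH x q) = qmul (comp2 x) q.
Proof. by rewrite /rmulH comp2_mk. Qed.
Lemma comp1J (x : vec) : comp1 (jmap x) = qmul (comp1 x) (qj R).
Proof. by rewrite /jmap comp1R. Qed.
Lemma comp2J (x : vec) : comp2 (jmap x) = qmul (comp2 x) (qj R).
Proof. by rewrite /jmap comp2R. Qed.
Lemma comp1M a b c d (x : vec) :
  comp1 (mob a b c d x) = qadd (qmul a (comp1 x)) (qmul b (comp2 x)).
Proof. by rewrite /mob comp1_mk. Qed.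
Lemma comp2M a b c d (x : vec) :
  comp2 (mob a b c d x) = qadd (qmul c (comp1 x)) (qmul d (comp2 x)).
Proof. by rewrite /mob comp2_mk. Qed.

Definition compE := (comp1_mk, comp2_mk, comp1D, comp2D, comp1Z, comp2Z, comp10, comp20,
  comp1N, comp2N, comp1R, comp2R, comp1J, comp2J, comp1M, comp2M).

End V.

Section V2.
Variable R : rcfType.
Local Notation C := R[i].
Local Notation quat := (quat R).
Local Notation vec := 'rV[C]_4.

Ltac genq := repeat match goal with
  | |- context [comp1 ?x] => generalize (comp1 x); intros ?
  | |- context [comp2 ?x] => generalize (comp2 x); intros ? end.
Ltac dq := repeat match goal with q : quat |- _ => destruct q end.
Ltac qsimpl := rewrite /qmul /qadd /qconj /qreal /q1 /q0 /qj /qneg /qc; cbn [fst snd].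
Ltac cring := rewrite ?(cjD, cjN, cjB, cjM, conjcK, conjc0, conjc1); ring.
Ltac vsolve := apply: vecP; rewrite !compE; genq; dq; qsimpl; congr (_,_); cring.

Lemma rmulHA (x : vec) p q : rmulH (rmulH x p) q = rmulH x (qmul p q).
Proof. vsolve. Qed.
Lemma rmulH1 (x : vec) : rmulH x (q1 R) = x.
Proof. vsolve. Qed.
Lemma rmulHDl (x y : vec) q : rmulH (x + y) q = rmulH x q + rmulH y q.
Proof. vsolve. Qed.
Lemma rmulHDr (x : vec) p q : rmulH x (qadd p q) = rmulH x p + rmulH x q.
Proof. vsolve. Qed.
Lemma rmulHZ (x : vec) z q : z *: rmulH x q = rmulH x (qmul q (qc z)).
Proof. vsolve. Qed.
Lemma scaleH (x : vec) z : z *: x = rmulH x (qc z).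
Proof. vsolve. Qed.
Lemma rmulH0 (x : vec) : rmulH x (q0 R) = 0.
Proof. vsolve. Qed.
Lemma rmul0H q : rmulH (0 : vec) q = 0.
Proof. vsolve. Qed.
Lemma rmulHN (x : vec) q : rmulH x (qneg q) = - rmulH x q.
Proof. vsolve. Qed.
Lemma jmapR (x : vec) q : jmap (rmulH x q) = rmulH x (qmul q (qj R)).
Proof. vsolve. Qed.
Lemma mobR a b c d (x : vec) q : mob a b c d (rmulH x q) = rmulH (mob a b c d x) q.
Proof. vsolve. Qed.
Lemma mobD a b c d (x y : vec) : mob a b c d (x + y) = mob a b c d x + mob a b c d y.
Proof. vsolve. Qed.
Lemma mob0 a b c d : mob a b c d (0 : vec) = 0.
Proof. vsolve. Qed.

Lemma rmulH_neq0 (x : vec) q : x != 0 -> q != q0 R -> rmulH x q != 0.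
Proof.
move=> hx hq; apply/eqP => h; move/eqP: hx; apply.
by rewrite -(rmulH1 x) -(qmulV hq) -rmulHA h rmul0H.
Qed.

Ltac hsolve := rewrite /hC /omega /hform ?compE; genq; dq; qsimpl; try congr (_,_); cring.

Lemma hformR (x y : vec) p q :
  hform (rmulH x p) (rmulH y q) = qmul (qconj p) (qmul (hform x y) q).
Proof. hsolve. Qed.
Lemma hformDl (x y v : vec) : hform (x + y) v = qadd (hform x v) (hform y v).
Proof. hsolve. Qed.
Lemma hformDr (x y v : vec) : hform v (x + y) = qadd (hform v x) (hform v y).
Proof. hsolve. Qed.
Lemma hformC (x y : vec) : hform y x = qconj (hform x y).
Proof. hsolve. Qed.
Lemma hformRr (x y : vec) q : hform x (rmulH y q) = qmul (hform x y) q.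
Proof. hsolve. Qed.
Lemma hformE1 (x : vec) : hform x (mkH2 (q1 R) (q0 R)) = qconj (comp2 x).
Proof. hsolve. Qed.
Lemma hformE2 (x : vec) : hform x (mkH2 (q0 R) (q1 R)) = qconj (comp1 x).
Proof. hsolve. Qed.

Lemma omega_linl (x y v : vec) a b :
  omega (a *: x + b *: y) v = a * omega x v + b * omega y v.
Proof. hsolve. Qed.
Lemma omega_linr (x y v : vec) a b :
  omega v (a *: x + b *: y) = a * omega v x + b * omega v y.
Proof. hsolve. Qed.
Lemma omega_alt (x : vec) : omega x x = 0.
Proof. hsolve. Qed.
Lemma omega_sym (x y : vec) : omega y x = - omega x y.
Proof. hsolve. Qed.

End V2.

Section M.
Variable R : rcfType.
Local Notation C := R[i].
Local Notation vec := 'rV[C]_4.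

Definition col2 (x y : vec) : 'M[C]_(2, 4) := col_mx x y.

Lemma row0_col2 (x y : vec) : row 0 (col2 x y) = x.
Proof.
apply/rowP => j; rewrite mxE (_ : (0 : 'I_2) = lshift 1 (0 : 'I_1)); last by apply: val_inj.
exact: (col_mxEu x y).
Qed.
Lemma row1_col2 (x y : vec) : row 1 (col2 x y) = y.
Proof.
apply/rowP => j; rewrite mxE (_ : (1 : 'I_2) = rshift 1 (0 : 'I_1)); last by apply: val_inj.
exact: (col_mxEd x y).
Qed.

Lemma mul_rows (c : 'rV[C]_2) (W : 'M[C]_(2,4)) :
  c *m W = c 0 0 *: row 0 W + c 0 1 *: row 1 W.
Proof. rewrite mulmx_sum_row !big_ord_recl big_ord0 addr0; congr (_ *: _ + _ *: _); try congr (_ _ _); try congr (row _ _); by apply: val_inj. Qed.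

Lemma sub_rows (v : vec) (W : 'M[C]_(2,4)) :
  (v <= W)%MS -> exists a b, v = a *: row 0 W + b *: row 1 W.
Proof. by case/submxP => c ->; exists (c 0 0), (c 0 1); rewrite mul_rows. Qed.

Lemma sub_col2 (v x y : vec) :
  (v <= col2 x y)%MS -> exists a b, v = a *: x + b *: y.
Proof. by move/sub_rows; rewrite row0_col2 row1_col2. Qed.

Lemma comb_sub (W : 'M[C]_(2,4)) a b :
  ((a *: row 0 W + b *: row 1 W)%R <= W)%MS.
Proof.
apply/submxP; exists (\row_(j < 2) if val j == 0%N then a else b).
by rewrite mul_rows !mxE.
Qed.

Lemma comb_col2 (x y : vec) a b : ((a *: x + b *: y)%R <= col2 x y)%MS.
Proof. by have := comb_sub (col2 x y) a b; rewrite row0_col2 row1_col2. Qed.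

Lemma rank2 (x y : vec) :
  (forall a b, a *: x + b *: y = 0 -> a = 0 /\ b = 0) -> \rank (col2 x y) = 2%N.
Proof.
move=> hi; set M := col2 x y.
have hK : kermx M = 0.
  apply/row_matrixP => i; rewrite row0.
  have := mulmx_ker M; move/(congr1 (row i)); rewrite row_mul row0 mul_rows.
  rewrite row0_col2 row1_col2 => /hi [h0 h1].
  apply/rowP => j; rewrite [RHS]mxE; case: j => [[|[|n]] Hj] //.
    by rewrite (_ : Ordinal Hj = 0) //; apply: val_inj.
  by rewrite (_ : Ordinal Hj = 1) //; apply: val_inj.
have := mxrank_ker M; rewrite hK mxrank0 => /esym /eqP; rewrite subn_eq0 => h.
by apply/eqP; rewrite eqn_leq rank_leq_row h.
Qed.

Lemma eq2 (X Y : 'M[C]_(2,4)) :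
  (X <= Y)%MS -> \rank X = 2%N -> \rank Y = 2%N -> (X == Y)%MS.
Proof. by move=> s hX hY; rewrite -(mxrank_leqif_eq s).2 hX hY. Qed.

Lemma col2_sub (x y : vec) (W : 'M[C]_(2,4)) :
  (x <= W)%MS -> (y <= W)%MS -> (col2 x y <= W)%MS.
Proof. by move=> hx hy; have := col_mx_sub x y W; rewrite hx hy; apply. Qed.

Lemma row_sub (W : 'M[C]_(2,4)) i : (row i W <= W)%MS.
Proof. exact: row_sub. Qed.

End M.

Ltac genq := repeat match goal with
  | |- context [comp1 ?x] => generalize (comp1 x); intros ?
  | |- context [comp2 ?x] => generalize (comp2 x); intros ? end.
Ltac dq := repeat match goal with q : quat _ |- _ => destruct q end.
Ltac qsimpl := rewrite /qmul /qadd /qconj /qreal /q1 /q0 /qj /qneg /qc; cbn [fst snd].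
Ltac cring := rewrite ?(cjD, cjN, cjB, cjM, conjcK, conjc0, conjc1, conjc_real); ring.
Ltac vsolve := apply: vecP; rewrite !compE; genq; dq; qsimpl; congr (_,_); cring.

Section Main.
Variable R : rcfType.
Local Notation C := R[i].
Local Notation quat := (quat R).
Local Notation vec := 'rV[C]_4.

Lemma conj_i : ('i%C : C)^*%C = - 'i%C.
Proof. by apply/eqP; rewrite eq_complex /= oppr0 !eqxx. Qed.
Lemma conj_ge0_eq (x : C) : 0 <= x -> x^*%C = x.
Proof. case: x => a b /ger0_Im /= ->; by rewrite oppr0. Qed.

Lemma qaddC (x y : quat) : qadd x y = qadd y x.
Proof. case: x y => [x1 x2] [y1 y2]; qsimpl; congr (_,_); ring. Qed.
Lemma qsub_eq0 (x y : quat) : qadd x (qneg y) = q0 R -> x = y.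
Proof.
case: x y => [x1 x2] [y1 y2]; qsimpl => -[h1 h2].
by rewrite (subr0_eq h1) (subr0_eq h2).
Qed.
Lemma qneg_eq0 (x : quat) : qneg x = q0 R -> x = q0 R.
Proof. by case: x => [x1 x2]; qsimpl => -[/eqP + /eqP]; rewrite !oppr_eq0 => /eqP -> /eqP ->. Qed.
Lemma qc_eq0 z : qc z = q0 R -> z = 0.
Proof. by case. Qed.
Lemma qcM (x y : C) : qmul (qc x) (qc y) = qc (x * y).
Proof. qsimpl; congr (_,_); cring. Qed.
Lemma qc_real_comm (t : R) (q : quat) : qmul (qc (t%:C)%C) q = qmul q (qc (t%:C)%C).
Proof. case: q => [q1 q2]; qsimpl; congr (_,_); cring. Qed.
Lemma qconjq (q : quat) : qmul (qconj q) q = qc (qnorm q).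
Proof. case: q => [q1 q2]; rewrite /qnorm; qsimpl; congr (_,_); cring. Qed.
Lemma qcancel (u g : quat) : u != q0 R -> qmul u (qmul (qinv u) g) = g.
Proof. by move=> hu; rewrite -qmulA qmulV // qmul1q. Qed.
Lemma qcancel' (u g : quat) : u != q0 R -> qmul (qinv u) (qmul u g) = g.
Proof. by move=> hu; rewrite -qmulA qmulVq // qmul1q. Qed.

Lemma combJ (x : vec) a b : a *: x + b *: jmap x = rmulH x (a, b).
Proof. vsolve. Qed.

Lemma sub_col2_l (x y : vec) a : (a *: x <= col2 x y)%MS.
Proof. by have := comb_col2 x y a 0; rewrite scale0r addr0. Qed.
Lemma sub_col2_r (x y : vec) b : (b *: y <= col2 x y)%MS.
Proof. by have := comb_col2 x y 0 b; rewrite scale0r add0r. Qed.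


Lemma col2_subl (x y : vec) : (x <= col2 x y)%MS.
Proof. by have := sub_col2_l x y 1; rewrite scale1r. Qed.
Lemma col2_subr (x y : vec) : (y <= col2 x y)%MS.
Proof. by have := sub_col2_r x y 1; rewrite scale1r. Qed.
Lemma eqmx_tr (X Y Z : 'M[C]_(2,4)) : (X == Y)%MS -> (Y == Z)%MS -> (X == Z)%MS.
Proof. move=> /eqmxP h1 /eqmxP h2; apply/eqmxP; exact: eqmx_trans h1 h2. Qed.

Lemma i_neq0 : ('i%C : C) != 0.
Proof. by apply/eqP => /eqP; rewrite eq_complex /= oner_eq0 andbF. Qed.
Lemma ii : ('i%C : C) * 'i%C = -1.
Proof. by rewrite -expr2 sqr_i. Qed.

Lemma kk_lem (k : quat) (n : C) : k.1 + k.1^*%C = 0 -> n * n = qnorm k ->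
  qmul k k = qmul (qc (n * 'i%C)) (qc (n * 'i%C)).
Proof.
case: k => k1 k2 /= hk n2.
have e1 : k1^*%C = - k1 by apply/eqP; rewrite -addr_eq0 addrC hk.
move: n2; rewrite /qnorm /= e1 => n2.
qsimpl; congr (_,_); rewrite ?conjc0 ?e1.
  rewrite (_ : n * 'i%C * (n * 'i%C) = (n * n) * ('i%C * 'i%C)); last by ring.
  rewrite ii n2; ring.
ring.
Qed.

Lemma q_lem (k : quat) (n : C) : k.1 + k.1^*%C = 0 -> n * n = qnorm k -> n^*%C = n ->
  exists q, q != q0 R /\ qmul k q = qmul q (qc (n * 'i%C)).
Proof.
move=> hk n2 nr; case: (eqVneq (qadd k (qc (n * 'i%C))) (q0 R)) => h.
  exists (qj R); split; first exact: qj_neq0.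
  move: h; case: k {hk n2} => k1 k2; qsimpl => -[h1 h2].
  have -> : k1 = - (n * 'i%C) by apply/eqP; rewrite -addr_eq0 h1.
  have -> : k2 = 0 by move: h2; rewrite addr0.
  congr (_,_); rewrite ?cjN ?cjM ?nr ?conj_i ?conjc0 ?conjc1; ring.
exists (qadd k (qc (n * 'i%C))); split => //.
by rewrite qmulDr qmulDl (kk_lem hk n2) qaddC.
Qed.

Lemma conj_lem (q r k : quat) :
  qmul (qconj (qmul q r)) (qmul k (qmul q r)) =
  qmul (qconj r) (qmul (qmul (qconj q) (qmul k q)) r).
Proof. case: q r k => [a1 a2] [b1 b2] [c1 c2]; qsimpl; congr (_,_); cring. Qed.

Lemma jpart (r : quat) (z : C) : z^*%C = - z ->
  (qmul (qconj r) (qmul (qc z) r)).2 = - (2%:R * z * (r.1 * r.2)).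
Proof. case: r => r1 r2 hz; qsimpl; rewrite hz; cring. Qed.

Lemma jpartj (z : C) : (qmul (qconj (qj R)) (qmul (qc z) (qj R))).2 = 0.
Proof. qsimpl; cring. Qed.

Lemma qj_qc (x : C) : qmul (qj R) (qc x) = (0, x).
Proof. qsimpl; congr (_,_); cring. Qed.

Lemma omega_sub (W : 'M[C]_(2,4)) (x y : vec) :
  inQ3 W -> (x <= W)%MS -> (y <= W)%MS -> omega x y = 0.
Proof.
move=> [_ h] /sub_rows [a [b ->]] /sub_rows [a' [b' ->]].
rewrite omega_linl !omega_linr !omega_alt (omega_sym (row 0 W) (row 1 W)) h; ring.
Qed.

Lemma samept_sph (W : 'M[C]_(2,4)) (y x : vec) g :
  y != 0 -> g != q0 R -> (rmulH y g <= W)%MS -> samept y x -> onsphere W x.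
Proof.
move=> hy hg hs [_ [r [hr ->]]]; exists (rmulH y g); split; first exact: rmulH_neq0.
split => //; split; first exact: rmulH_neq0.
exists (qmul (qinv g) r); split; first by apply: qmul_neq0 => //; apply: qinv_neq0.
by rewrite rmulHA qcancel.
Qed.

Lemma pick_sph (W : 'M[C]_(2,4)) (y : vec) :
  onsphere W y -> exists g, g != q0 R /\ (rmulH y g <= W)%MS.
Proof.
move=> [v [hv [hs [_ [h [hh ->]]]]]]; exists (qinv h); split; first exact: qinv_neq0.
by rewrite rmulHA qmulV // rmulH1.
Qed.


Lemma main_rcf (a b c d p u : quat) :
  mob_invertible a b c d -> u != q0 R ->
  (forall x, oncircle a b c d p u x -> inS3pt x) ->
  exists W : 'M[C]_(2, 4),
    inQ3mS3 W /\ inQ3mS3 (jspan W) /\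
    (forall x, oncircle a b c d p u x -> onsphere W x) /\
    (forall W' : 'M[C]_(2, 4), inQ3mS3 W' ->
       (forall x, oncircle a b c d p u x -> onsphere W' x) ->
       (W' == W)%MS \/ (W' == jspan W)%MS).
Proof.
move=> hinv hu hS3.
case: (hinv) => a' [b' [c' [d' [H1 H2]]]].
set A := mob a b c d.
set v1 := A (mkH2 (q1 R) (q0 R)).
set w0 := A (mkH2 p (q1 R)).
set w1 := rmulH v1 u.
have indep : forall al be, rmulH w0 al + rmulH w1 be = 0 -> al = q0 R /\ be = q0 R.
  move=> al be h.
  have e : rmulH w0 al + rmulH w1 be = A (mkH2 (qadd (qmul p al) (qmul u be)) al).
    rewrite /w1 rmulHA /w0 /v1 /A -!mobR -mobD; congr (mob _ _ _ _ _); vsolve.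
  move: h; rewrite e => /(congr1 (mob a' b' c' d')); rewrite H1 mob0 => h.
  have h2 := congr1 (@comp2 R) h; have h1 := congr1 (@comp1 R) h.
  rewrite comp2_mk comp20 in h2; rewrite comp1_mk comp10 h2 qmulq0 in h1.
  split => //; apply/eqP; apply: contraT => hb.
  have := qmul_neq0 hu hb.
  suff -> : qmul u be = q0 R by rewrite eqxx.
  by move: h1; case: (qmul u be) => x y; rewrite /qadd /q0 /= !add0r.
have span : forall y, exists al be, y = rmulH w0 al + rmulH w1 be.
  move=> y; set z := mob a' b' c' d' y.
  exists (comp2 z), (qmul (qinv u) (qadd (comp1 z) (qneg (qmul p (comp2 z))))).
  rewrite -{1}(H2 y) -/z /w1 rmulHA qcancel // /w0 /v1 /A -!mobR -mobD.
  congr (mob _ _ _ _ _); vsolve.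
have w0n : w0 != 0.
  apply/eqP => h; have := indep (q1 R) (q0 R); rewrite h rmul0H rmulH0 addr0 => /(_ erefl) [].
  by move/eqP; rewrite (negbTE (q1_neq0 R)).
have w1n : w1 != 0.
  apply/eqP => h; have := indep (q0 R) (q1 R); rewrite h rmul0H rmulH0 addr0 => /(_ erefl) [_].
  by move/eqP; rewrite (negbTE (q1_neq0 R)).
have v1n : v1 != 0.
  by apply: contraNneq w1n => h; rewrite /w1 h rmul0H.
have pts : forall t : R, A (mkH2 (qadd p (qmul (qreal t) u)) (q1 R)) = w0 + (t%:C)%C *: w1.
  move=> t; rewrite scaleH /w1 rmulHA /w0 /v1 /A -mobR -mobD; congr (mob _ _ _ _ _); vsolve.
have ptn : forall t : R, w0 + (t%:C)%C *: w1 != 0.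
  move=> t; apply/eqP => h; have := indep (q1 R) (qc (t%:C)%C).
  rewrite rmulH1 -scaleH h => /(_ erefl) [] /eqP; by rewrite (negbTE (q1_neq0 R)).
have onInf : forall x, samept v1 x -> oncircle a b c d p u x by move=> x h; left.
have onT : forall (t : R) x, samept (w0 + (t%:C)%C *: w1) x -> oncircle a b c d p u x.
  by move=> t x h; right; exists t; rewrite -/A pts.
have spt : forall y : vec, y != 0 -> samept y y.
  by move=> y hy; split => //; exists (q1 R); rewrite rmulH1; split => //; exact: (q1_neq0 R).
have e0 : w0 + ((0:R)%:C)%C *: w1 = w0 by rewrite rmorph0 scale0r addr0.
have e1 : w0 + ((1:R)%:C)%C *: w1 = w0 + w1 by rewrite rmorph1 scale1r.
have h00 : hform w0 w0 = q0 R.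
  by case: (hS3 w0) => //; apply: (onT 0); rewrite e0; exact: spt.
have h11 : hform w1 w1 = q0 R.
  case: (hS3 w1 (onInf w1 _)) => //; split => //; exists u; split => //.
have hsum : hform (w0 + w1) (w0 + w1) = q0 R.
  have := ptn 1; rewrite e1 => hn.
  by case: (hS3 (w0 + w1)) => //; apply: (onT 1); rewrite e1; exact: spt.
set k := hform w0 w1.
have hk : k.1 + k.1^*%C = 0.
  move: hsum; rewrite hformDl !hformDr h00 h11 (hformC w0 w1) -/k.
  by case: k => k1 k2; qsimpl => -[h _]; rewrite -h; ring.
have kn : k != q0 R.
  apply/eqP => hk0.
  have hall : forall y, hform w0 y = q0 R.
    move=> y; case: (span y) => al [be ->].
    by rewrite hformDr (hformRr w0 w0) (hformRr w0 w1) h00 -/k hk0 !qmul0q /qadd /q0 /= addr0.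
  have c1 := hall (mkH2 (q1 R) (q0 R)); have c2 := hall (mkH2 (q0 R) (q1 R)).
  rewrite hformE1 in c1; rewrite hformE2 in c2.
  move/eqP: w0n; apply; apply: vecP; rewrite ?comp10 ?comp20.
    by rewrite -(qconjK (comp1 w0)) c2 /qconj /q0; cbn [fst snd]; rewrite conjc0 oppr0.
  by rewrite -(qconjK (comp2 w0)) c1 /qconj /q0; cbn [fst snd]; rewrite conjc0 oppr0.
have nk : qnorm k != 0 by apply/eqP => /qnorm_eq0 /eqP; rewrite (negbTE kn).
have nge : 0 <= qnorm k by rewrite /qnorm addr_ge0 // cj_ge0.
set n := sqrtc (qnorm k).
have n2 : n * n = qnorm k by rewrite -expr2 sqr_sqrtc.
have nr : n^*%C = n by apply: conj_ge0_eq; rewrite sqrtc_ge0.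
have nn : n != 0 by apply: contraNneq nk => h; rewrite -n2 h mul0r.
have [q [hq hkq]] := q_lem hk n2 nr.
have qn : qnorm q != 0 by apply/eqP => /qnorm_eq0 /eqP; rewrite (negbTE hq).
set cc := qnorm q * n.
have cq : qmul (qconj q) (qmul k q) = qc (cc * 'i%C).
  by rewrite hkq -qmulA qconjq qcM mulrA.
have ccr : cc^*%C = cc by rewrite /cc cjM qnorm_real nr.
have ccn : cc != 0 by rewrite /cc mulf_neq0.
have rankW : forall g g', g != q0 R -> g' != q0 R ->
    \rank (col2 (rmulH w0 g) (rmulH w1 g')) = 2%N.
  move=> g g' hg hg'; apply: rank2 => al be; rewrite !rmulHZ => /indep [h1 h2].
  split; apply: qc_eq0; apply/eqP; apply: contraT => hne.
    by have := qmul_neq0 hg hne; rewrite h1 eqxx.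
  by have := qmul_neq0 hg' hne; rewrite h2 eqxx.
have notS3 : forall g g', g != q0 R -> g' != q0 R ->
    ~ isS3inQ3 (col2 (rmulH w0 g) (rmulH w1 g')).
  move=> g g' hg hg' [x [[hx _] /andP [sW _]]].
  have sW' : (col2 (rmulH w0 g) (rmulH w1 g') <= col2 x (jmap x))%MS := sW.
  have r0 := submx_trans (col2_subl _ _) sW'.
  have r1 := submx_trans (col2_subr _ _) sW'.
  case/sub_col2: r0 => a0 [b0]; rewrite combJ => e0'.
  case/sub_col2: r1 => a1 [b1]; rewrite combJ => e1'.
  have h0n : (a0, b0) != q0 R.
    by apply/eqP => h; have := rmulH_neq0 w0n hg; rewrite e0' h rmulH0 eqxx.
  have ex : x = rmulH w0 (qmul g (qinv (a0, b0))).
    by rewrite -rmulHA e0' rmulHA qmulV // rmulH1.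
  have := indep (qmul (qmul g (qinv (a0, b0))) (a1, b1)) (qneg g').
  rewrite rmulHN -rmulHA -ex -e1' subrr => /(_ erefl) [_ /qneg_eq0 /eqP].
  by rewrite (negbTE hg').
have omegaW : forall g, omega (rmulH w0 g) (rmulH w1 g) = (qmul (qconj g) (qmul k g)).2.
  by move=> g; rewrite /omega hformR.
set W := col2 (rmulH w0 q) (rmulH w1 q).
have hqj : qmul q (qj R) != q0 R by apply: qmul_neq0 => //; exact: (qj_neq0 R).
have hJ : jspan W = col2 (rmulH w0 (qmul q (qj R))) (rmulH w1 (qmul q (qj R))).
  by rewrite /jspan /W row0_col2 row1_col2 !jmapR.
have o0 : oncircle a b c d p u w0 by apply: (onT 0); rewrite e0; exact: spt.
have o1 : oncircle a b c d p u v1 by apply: onInf; exact: spt.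
have o2 : oncircle a b c d p u (w0 + w1).
  by apply: (onT 1); rewrite e1; apply: spt; have := ptn 1; rewrite e1.
exists W; split.
  split; last exact: notS3.
  split; first exact: rankW.
  by rewrite /W row0_col2 row1_col2 omegaW cq.
split.
  rewrite hJ; split; last exact: notS3.
  split; first exact: rankW.
  by rewrite row0_col2 row1_col2 omegaW (conj_lem q (qj R)) cq jpartj.
split.
  move=> x [hx|[t hx]].
    apply: (@samept_sph W v1 x (qmul u q) v1n _ _ hx); first exact: qmul_neq0.
    by rewrite -rmulHA -/w1; exact: col2_subr.
  rewrite -/A pts in hx.
  apply: (@samept_sph W _ x q (ptn t) hq _ hx).
  rewrite rmulHDl scaleH rmulHA qc_real_comm -rmulHA -scaleH -[rmulH w0 q]scale1r.
  exact: comb_col2.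
move=> W' [[hr hom] _] hsph.
have [g0 [hg0 s0]] := pick_sph (hsph _ o0).
have [g1' [hg1' s1']] := pick_sph (hsph _ o1).
have [g2 [hg2 s2]] := pick_sph (hsph _ o2).
set g1 := qmul (qinv u) g1'.
have hg1 : g1 != q0 R by apply: qmul_neq0 => //; exact: qinv_neq0.
have s1 : (rmulH w1 g1 <= W')%MS by rewrite /w1 rmulHA qcancel.
set MM := col2 (rmulH w0 g0) (rmulH w1 g1).
have sM : (MM <= W')%MS by exact: col2_sub.
have eM : (MM == W')%MS by apply: eq2 => //; exact: rankW.
have sW'M : (W' <= MM)%MS by case/andP: eM.
have := submx_trans s2 sW'M; case/sub_col2 => al [be E].
rewrite rmulHDl in E.
have := indep (qadd g2 (qneg (qmul g0 (qc al)))) (qadd g2 (qneg (qmul g1 (qc be)))).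
rewrite !rmulHDr !rmulHN -!rmulHZ addrACA -opprD E subrr => /(_ erefl) [/qsub_eq0 E0 /qsub_eq0 E1].
set NN := col2 (rmulH w0 g2) (rmulH w1 g2).
have sNM : (NN <= MM)%MS.
  apply: col2_sub; first by rewrite E0 -rmulHZ; exact: sub_col2_l.
  by rewrite E1 -rmulHZ; exact: sub_col2_r.
have rN : \rank NN = 2%N by exact: rankW.
have eNM : (NN == MM)%MS by apply: eq2 => //; exact: rankW.
have sMN : (MM <= NN)%MS by case/andP: eNM.
have eW'N : (W' == NN)%MS by apply: eq2 => //; exact: submx_trans sW'M sMN.
have sNW' : (NN <= W')%MS by exact: submx_trans sNM sM.
have om := omega_sub (conj hr hom) (submx_trans (col2_subl _ _) sNW') (submx_trans (col2_subr _ _) sNW').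
rewrite omegaW in om.
have [r hg2q] : exists r, g2 = qmul q r by exists (qmul (qinv q) g2); rewrite qcancel.
have hz : (cc * 'i%C)^*%C = - (cc * 'i%C) by rewrite cjM ccr conj_i mulrN.
move: om; rewrite hg2q conj_lem cq jpart //.
case: r hg2q => r1 r2 hg2q; cbn [fst snd].
move/eqP; rewrite oppr_eq0 !mulf_eq0 pnatr_eq0 (negbTE qn) (negbTE nn) (negbTE i_neq0) /=.
case/orP => /eqP hr0.
  right; apply: (eqmx_tr eW'N); rewrite hJ /NN.
  have eg : g2 = qmul (qmul q (qj R)) (qc r2) by rewrite qmulA qj_qc hg2q hr0.
  clear E E0 E1 hg2q; subst g2.
  apply: eq2; [|exact: (rankW _ _ hg2 hg2)|exact: (rankW _ _ hqj hqj)].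
  by apply: col2_sub; rewrite -rmulHZ; [exact: sub_col2_l|exact: sub_col2_r].
left; apply: (eqmx_tr eW'N); rewrite /NN /W.
have eg : g2 = qmul q (qc r1) by rewrite hg2q hr0.
clear E E0 E1 hg2q; subst g2.
apply: eq2; [|exact: (rankW _ _ hg2 hg2)|exact: (rankW _ _ hq hq)].
by apply: col2_sub; rewrite -rmulHZ; [exact: sub_col2_l|exact: sub_col2_r].
Qed.

End Main.

Unset Implicit Arguments.

Theorem mainTheorem9 (R : realType) (a b c d p u : quat R) :
  mob_invertible a b c d -> u != q0 R ->
  (* the circle L lies in S^3 *)
  (forall x, oncircle a b c d p u x -> inS3pt x) ->
  exists W : 'M[R[i]]_(2, 4),
    inQ3mS3 W /\ inQ3mS3 (jspan W) /\
    (forall x, oncircle a b c d p u x -> onsphere W x) /\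
    (forall W' : 'M[R[i]]_(2, 4), inQ3mS3 W' ->
       (forall x, oncircle a b c d p u x -> onsphere W' x) ->
       (W' == W)%MS \/ (W' == jspan W)%MS).
Proof. exact: (@main_rcf R a b c d p u). Qed.
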